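(* Let $N, n, p, \ell, K \in \mathbb{N}$ with $n \le N$. For $i = 1, \dots, \ell$ let $\boldsymbol A_i \in \mathbb{R}^{N \times N_i}$ with $N_i = \binom{N+i-1}{i}$, and let $\boldsymbol B \in \mathbb{R}^{N \times p}$. Consider the discrete-time system $$\boldsymbol f(\boldsymbol x, \boldsymbol u) = \sum_{i=1}^{\ell} \boldsymbol A_i \boldsymbol x^i + \boldsymbol B \boldsymbol u, \qquad \boldsymbol x \in \mathbb{R}^N,\ \boldsymbol u \in \mathbb{R}^p.$$ Let $\boldsymbol V_n \in \mathbb{R}^{N \times n}$ have orthonormal columns spanning $\mathcal{V}_n \subset \mathbb{R}^N$. Let $n_i = \binom{n+i-1}{i}$ and define the intrusive reduced operators $\tilde{\boldsymbol B} = \boldsymbol V_n^T \boldsymbol B$ and $\tilde{\boldsymbol A}_i \in \mathbb{R}^{n \times n_i}$ as the unique matrix with $\tilde{\boldsymbol A}_i \boldsymbol y^i = \boldsymbol V_n^T \boldsymbol A_i (\boldsymbol V_n \boldsymbol y)^i$ for all $\boldsymbol y \in \mathbb{R}^n$, $i = 1, \dots, \ell$. Let $\boldsymbol x_0 \in \mathcal{V}_n$ and $\boldsymbol u_0, \dots, \boldsymbol u_{K-1} \in \mathbb{R}^p$, and generate re-projected states $\bar{\boldsymbol x}_0 = \boldsymbol V_n^T \boldsymbol x_0$, $\bar{\boldsymbol x}_{k+1} = \boldsymbol V_n^T \boldsymbol f(\boldsymbol V_n \bar{\boldsymbol x}_k, \boldsymbol u_k)$ for $k = 0, \dots, K-1$.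 Set $\bar{\boldsymbol X} = [\bar{\boldsymbol x}_0, \dots, \bar{\boldsymbol x}_{K-1}]$, $\bar{\boldsymbol Y} = [\bar{\boldsymbol x}_1, \dots, \bar{\boldsymbol x}_K]$, $\bar{\boldsymbol X}^i = [\bar{\boldsymbol x}_0^i, \dots, \bar{\boldsymbol x}_{K-1}^i] \in \mathbb{R}^{n_i \times K}$, and $\boldsymbol U = [\boldsymbol u_0, \dots, \boldsymbol u_{K-1}] \in \mathbb{R}^{p \times K}$. Suppose $$K \ge p + \sum_{i=1}^{\ell} n_i,$$ and consider the data matrix $$\bar{\boldsymbol D} = \begin{bmatrix} \bar{\boldsymbol X} \\ \bar{\boldsymbol X}^2 \\ \vdots \\ \bar{\boldsymbol X}^{\ell} \\ \boldsymbol U \end{bmatrix} \in \mathbb{R}^{(\sum_{i=1}^{\ell} n_i + p) \times K}.$$ If $\bar{\boldsymbol D}$ has full rank, then the least-squares problem $$\min_{\hat{\boldsymbol O} \in \mathbb{R}^{n \times (\sum_{i=1}^{\ell} n_i + p)}} \|\bar{\boldsymbol D}^T \hat{\boldsymbol O}^T - \bar{\boldsymbol Y}^T\|_F^2$$ has a unique solution $\hat{\boldsymbol O}^*$, it attains objective value $0$, and $\hat{\boldsymbol O}^* = [\tilde{\boldsymbol A}_1, \tilde{\boldsymbol A}_2, \dots, \tilde{\boldsymbol A}_{\ell}, \tilde{\boldsymbol B}]$.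
   Context: For a vector $\boldsymbol z \in \mathbb{R}^d$ and $i \in \mathbb{N}$, the $i$-th power $\boldsymbol z^i \in \mathbb{R}^{\binom{d+i-1}{i}}$ is the vector obtained from the $i$-fold Kronecker product $\boldsymbol z \otimes \cdots \otimes \boldsymbol z$ by removing duplicate entries arising from commutativity of multiplication, i.e., it lists each degree-$i$ monomial in the entries of $\boldsymbol z$ exactly once (in a fixed ordering); $\boldsymbol z^1 = \boldsymbol z$. Since these monomials are linearly independent functions, each $\tilde{\boldsymbol A}_i$ is well defined and unique. *)

(* Defs.v *)
From HB Require Import structures.
From mathcomp Require Import all_boot all_order all_algebra.
Set Implicit Arguments. Unset Strict Implicit. Unset Printing Implicit Defensive.
Import Order.TTheory GRing.Theory Num.Theory.
Local Open Scope ring_scope.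

(* Exponent vectors of the degree-i monomials in d variables:
   m : 'I_d -> 'I_(i+1) with sum of exponents equal to i. *)
Definition mons (d i : nat) : {set {ffun 'I_d -> 'I_i.+1}} :=
  [set m : {ffun 'I_d -> 'I_i.+1} | (\sum_(j < d) (m j : nat) == i)%N].

(* number of degree-i monomials in d variables (= 'C(d+i-1, i)) *)
Definition nmon (d i : nat) : nat := #|mons d i|.

(* i-th power z^i : each degree-i monomial of the entries of z exactly once,
   in the fixed ordering given by enum (mons d i). *)
Definition mpow {R : comRingType} (d i : nat) (z : 'cV[R]_d) : 'cV[R]_(nmon d i) :=
  \col_(k < nmon d i) \prod_(j < d) z j 0 ^+ ((enum_val k : {ffun _ -> _}) j : nat).

(* f(x,u) = sum_{i=1}^l A_i x^i + B u, with A i the operator of degree i.+1 *)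
Definition fsys {R : comRingType} (N p l : nat)
  (A : forall i : 'I_l, 'M[R]_(N, nmon N i.+1)) (B : 'M[R]_(N, p))
  (x : 'cV[R]_N) (u : 'cV[R]_p) : 'cV[R]_N :=
  \sum_(i < l) A i *m mpow i.+1 x + B *m u.

Fixpoint xbar {R : comRingType} (N n p l : nat) (V : 'M[R]_(N, n))
  (A : forall i : 'I_l, 'M[R]_(N, nmon N i.+1)) (B : 'M[R]_(N, p))
  (x0 : 'cV[R]_N) (u : nat -> 'cV[R]_p) (k : nat) : 'cV[R]_n :=
  match k with
  | 0 => V^T *m x0
  | k'.+1 => V^T *m fsys A B (V *m xbar V A B x0 u k') (u k')
  end.

Definition frob2 {R : comRingType} (m q : nat) (M : 'M[R]_(m, q)) : R :=
  \sum_(i < m) \sum_(j < q) M i j ^+ 2.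

(* Main.v *)
Require Import Defs.
From HB Require Import structures.
From mathcomp Require Import all_boot all_order all_algebra.
Import Order.TTheory GRing.Theory Num.Theory.
Local Open Scope ring_scope.

Lemma frob2_eq0 (R : realFieldType) m q (M : 'M[R]_(m, q)) : frob2 M = 0 -> M = 0.
Proof.
rewrite /frob2 => H; apply/matrixP => i j; rewrite mxE.
have Hi : forall i, \sum_(j < q) M i j ^+ 2 = 0.
  by move=> i'; apply: (psumr_eq0P _ H) => // i0 _; apply: sumr_ge0 => j0 _; apply: sqr_ge0.
have Hij : M i j ^+ 2 = 0.
  by apply: (psumr_eq0P _ (Hi i)) => // j0 _; apply: sqr_ge0.
by apply/eqP; rewrite -sqrf_eq0 Hij.
Qed.

Theorem corollary3p2 (R : realFieldType) (N n p l K : nat)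
  (A : forall i : 'I_l, 'M[R]_(N, nmon N i.+1)) (B : 'M[R]_(N, p))
  (V : 'M[R]_(N, n))
  (At : forall i : 'I_l, 'M[R]_(n, nmon n i.+1))
  (x0 : 'cV[R]_N) (u : nat -> 'cV[R]_p) :
  (n <= N)%N ->
  V^T *m V = 1%:M ->
  (forall (i : 'I_l) (y : 'cV[R]_n),
      At i *m mpow i.+1 y = V^T *m A i *m mpow i.+1 (V *m y)) ->
  (exists y : 'cV[R]_n, x0 = V *m y) ->
  (p + \sum_(i < l) nmon n i.+1 <= K)%N ->
  let xb := xbar V A B x0 u in
  let Xi := fun i : 'I_l =>
    \matrix_(r < nmon n i.+1, k < K) (mpow i.+1 (xb k)) r 0 in
  let U := \matrix_(r < p, k < K) u k r 0 in
  let Ybar := \matrix_(r < n, k < K) xb k.+1 r 0 in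
  let D : 'M[R]_(\sum_(i < l) nmon n i.+1 + p, K) := col_mx (mxcol Xi) U in
  let obj := fun O : 'M[R]_(n, \sum_(i < l) nmon n i.+1 + p) =>
    frob2 (D^T *m O^T - Ybar^T) in
  let Ostar : 'M[R]_(n, \sum_(i < l) nmon n i.+1 + p) :=
    row_mx (mxrow At) (V^T *m B) in
  \rank D = minn (\sum_(i < l) nmon n i.+1 + p) K ->
  [/\ forall O, obj Ostar <= obj O,
      forall O, (forall O', obj O <= obj O') -> O = Ostar
    & obj Ostar = 0].
Proof.
move=> nN VV HA _ HK xb Xi U Ybar D obj Ostar rD.
have YE : Ybar = Ostar *m D.
  apply/matrixP => r k.
  suff: col k Ybar = col k (Ostar *m D) by move/matrixP/(_ r 0); rewrite !mxE.
  rewrite [col k (Ostar *m D)]colE -mulmxA -colE /Ostar /D.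
  have -> : col k (col_mx (mxcol Xi) U) = col_mx (mxcol (fun i => mpow i.+1 (xb k))) (u k).
    apply/matrixP => a b; rewrite !mxE; case: splitP => a' _.
      by rewrite !mxE; congr (_ _ _); apply: ord_inj; rewrite (ord1 b).
    by rewrite !mxE (ord1 b).
  rewrite mul_row_col mul_mxrow_mxcol.
  have -> : col k Ybar = xb k.+1.
    by apply/matrixP => a b; rewrite !mxE (ord1 b).
  rewrite /xb /= /fsys mulmxDr mulmx_sumr mulmxA; congr (_ + _).
  by apply: eq_bigr => i _; rewrite HA -!mulmxA.
have obj0 : obj Ostar = 0.
  rewrite /obj YE trmx_mul subrr /frob2.
  by apply: big1 => i _; apply: big1 => j _; rewrite mxE expr0n.
have objge : forall O, 0 <= obj O.
  by move=> O; rewrite /obj /frob2; apply: sumr_ge0 => i _; apply: sumr_ge0 => j _; apply: sqr_ge0.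
split => //.
- by move=> O; rewrite obj0.
move=> O HO.
have O0 : obj O = 0 by apply/eqP; rewrite eq_le objge andbT -obj0 HO.
have Z : D^T *m O^T - Ybar^T = 0 by apply: frob2_eq0.
have E : O *m D = Ostar *m D.
  by rewrite -YE; apply: trmx_inj; rewrite trmx_mul; apply/eqP; rewrite -subr_eq0 Z.
have rf : row_free D.
  by rewrite /row_free rD; apply/eqP/minn_idPl; apply: leq_trans HK; rewrite addnC.
exact: (row_free_inj rf E).
Qed.
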